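(* Let $m$ be odd, let $f:\mathbb{Z}_m\to\{\pm1,\pm\mathrm{i}\}$ be a quaternary sequence, and let $\phi(0,k)=\mathrm{Re}f(k)-\mathrm{Im}f(k)$, $\phi(1,k)=\mathrm{Re}f(k)+\mathrm{Im}f(k)$ for $k\in\mathbb{Z}_m$. Put \[ B=\{j\in\mathbb{Z}_m:\phi(0,j)=-1\},\qquad D=\{j\in\mathbb{Z}_m:\phi(1,j)=-1\}. \] Then $f$ is an OQS if and only if $B$ and $D$ are $2$-$\{m;|B|,|D|;|B|+|D|-\frac{m+1}{2}\}$ ASDS and the multiset $B-D$ is symmetric.
   Context: $\mathrm{i}=\sqrt{-1}$. A quaternary sequence $f:\mathbb{Z}_m\to\{\pm1,\pm\mathrm{i}\}$ of odd length $m$ is an OQS if $|R_f(w)|=1$ for all $1\le w\le m-1$, where $R_f(w)=\sum_{k\in\mathbb{Z}_m}f(k)\overline{f(k+w)}$. For $B,D\subseteq\mathbb{Z}_m$ and $a\in\mathbb{Z}_m\setminus\{0\}$, let $N_{B,D}(a)=|\{(x,x')\in B\times B: x-x'\equiv a\}|+|\{(y,y')\in D\times D: y-y'\equiv a\}|$. For an integer $\mu$, $B$ and $D$ are $2$-$\{m;k,r;\mu\}$ ASDS if $|B|=k$, $|D|=r$ and $N_{B,D}(a)\in\{\mu,\mu+1\}$ for every $a\in\mathbb{Z}_m\setminus\{0\}$. The multiset $B-D$ of differences $x-y \bmod m$, $(x,y)\in B\times D$, is symmetric (closed under negation) if for every $w\in\mathbb{Z}_m$, $|\{(x,y)\in B\times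 D: x-y\equiv w\}|=|\{(x,y)\in B\times D: x-y\equiv -w\}|$. *)

(* Defs.v *)
(* Z_m is modelled by 'I_m with arithmetic mod m on nat
   (this works uniformly for all odd m, including m = 1). *)
From HB Require Import structures.
From mathcomp Require Import all_boot all_order all_algebra all_field.
Set Implicit Arguments. Unset Strict Implicit. Unset Printing Implicit Defensive.
Import Order.TTheory GRing.Theory Num.Theory.
Local Open Scope ring_scope.

Definition addm (m : nat) (k : 'I_m) (w : nat) : nat := ((k + w) %% m)%N.

Lemma addm_lt (m : nat) (k : 'I_m) (w : nat) : (addm k w < m)%N.
Proof. rewrite /addm ltn_pmod //; exact: leq_ltn_trans (leq0n k) (ltn_ord k). Qed.

Definition shiftm (m : nat) (k : 'I_m) (w : nat) : 'I_m := Ordinal (addm_lt k w).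

Definition quaternary (m : nat) (f : 'I_m -> algC) : Prop :=
  forall k, f k \in [:: 1; -1; 'i; - 'i].

Definition autocorr (m : nat) (f : 'I_m -> algC) (w : nat) : algC :=
  \sum_(k : 'I_m) f k * (f (shiftm k w))^*.

Definition OQS (m : nat) (f : 'I_m -> algC) : Prop :=
  quaternary f /\ forall w : nat, (1 <= w <= m.-1)%N -> `|autocorr f w| = 1.

Definition ndiff (m : nat) (B D : {set 'I_m}) (a : nat) : nat :=
  #|[set p : 'I_m * 'I_m | (p.1 \in B) && (p.2 \in D) && (val p.1 == addm p.2 a)]|.

Definition N_BD (m : nat) (B D : {set 'I_m}) (a : nat) : nat :=
  (ndiff B B a + ndiff D D a)%N.

Definition ASDS2 (m : nat) (B D : {set 'I_m}) (k r : nat) (mu : int) : Prop :=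
  #|B| = k /\ #|D| = r /\
  forall a : nat, (1 <= a <= m.-1)%N ->
    ((N_BD B D a)%:Z == mu) || ((N_BD B D a)%:Z == mu + 1).

(* the multiset B - D is closed under negation:
   #{(x,y) : x - y = w} = #{(x,y) : x - y = -w}, i.e. y - x = w *)
Definition symmetric_diff (m : nat) (B D : {set 'I_m}) : Prop :=
  forall w : 'I_m,
    #|[set p : 'I_m * 'I_m | (p.1 \in B) && (p.2 \in D) && (val p.1 == addm p.2 w)]|
  = #|[set p : 'I_m * 'I_m | (p.1 \in B) && (p.2 \in D) && (val p.2 == addm p.1 w)]|.

Definition phi0 (z : algC) : algC := 'Re z - 'Im z.
Definition phi1 (z : algC) : algC := 'Re z + 'Im z.

(* Main.v *)
Require Import Defs.
From HB Require Import structures.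
From mathcomp Require Import all_boot all_order all_algebra all_field.
From mathcomp Require Import ring lra zify.
Import Order.TTheory GRing.Theory Num.Theory.
Local Open Scope ring_scope.
Set Implicit Arguments. Unset Strict Implicit. Unset Printing Implicit Defensive.
Definition bR (b : bool) : algC := (b : nat)%:R.
Lemma ReIm_N (z : algC) : 'Re (- z) = - 'Re z /\ 'Im (- z) = - 'Im z.
Proof. by rewrite !raddfN. Qed.
Lemma one_neq_m1 : (1 : algC) != -1.
Proof. by rewrite -subr_eq0 opprK (pnatr_eq0 _ 2). Qed.
Lemma qdecomp (z : algC) : z \in [:: 1; -1; 'i; - 'i] ->
  z = ((1 - 'i) * (1 - 2 * bR (phi0 z == -1)) + (1 + 'i) * (1 - 2 * bR (phi1 z == -1))) / 2.
Proof.
have h1 : 'Re (1:algC) = 1 /\ 'Im (1:algC) = 0.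
  by split; [apply/Creal_ReP|apply/Creal_ImP]; rewrite real1.
have hRN : forall x : algC, 'Re (- x) = - 'Re x by move=> x; rewrite raddfN.
have hIN : forall x : algC, 'Im (- x) = - 'Im x by move=> x; rewrite raddfN.
have n1 := one_neq_m1.
have n1' : (-1:algC) != 1 by rewrite eq_sym.
have two : (2:algC) != 0 by rewrite (pnatr_eq0 _ 2).
rewrite !inE /phi0 /phi1 => /or4P [] /eqP ->;
 rewrite ?hRN ?hIN ?Re_i ?Im_i ?h1.1 ?h1.2 /bR ?oppr0 ?subr0 ?add0r ?sub0r ?addr0 ?opprK ?eqxx ?(negbTE n1) ?(negbTE n1') /= ?mulr0n ?mulr1n.
all: by field.
Qed.

Lemma prod_id (j b d b' d' : algC) : j * j = -1 ->
 ((1-j)*(1-2*b) + (1+j)*(1-2*d))/2 * (((1+j)*(1-2*b') + (1-j)*(1-2*d'))/2)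
 = (1 - 2*b - 2*d + 2*(b*b') + 2*(d*d') + j*(2*(d*b') - 2*(b*d'))) + (b + d + j*(b-d)) - (b' + d' + j*(b'-d')).
Proof.
move=> hj.
have two : (2:algC) != 0 by rewrite (pnatr_eq0 _ 2).
have -> : ((1-j)*(1-2*b) + (1+j)*(1-2*d))/2 * (((1+j)*(1-2*b') + (1-j)*(1-2*d'))/2)
  = (1 - 2*b - 2*d + 2*(b*b') + 2*(d*d') + j*(2*(d*b') - 2*(b*d'))) + (b + d + j*(b-d)) - (b' + d' + j*(b'-d'))
   + (- (1-2*b)*(1-2*b') + (1-2*b)*(1-2*d') + (1-2*d)*(1-2*b') - (1-2*d)*(1-2*d'))/4 * (j*j+1).
  by field.
by rewrite hj addNr mulr0 addr0.
Qed.
Section S.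
Variable m : nat.
Lemma shiftm_inj (w : nat) : injective (fun k : 'I_m => shiftm k w).
Proof.
move=> x y /(congr1 val) /= /eqP; rewrite /addm eqn_modDr !modn_small // => /eqP e.
exact: val_inj.
Qed.
Lemma sum_shift (F : 'I_m -> algC) w : \sum_k F (shiftm k w) = \sum_k F k.
Proof. by symmetry; apply: (reindex_inj (@shiftm_inj w)). Qed.
Lemma card1 (U V : {set 'I_m}) w :
  #|[set p : 'I_m * 'I_m | (p.1 \in U) && (p.2 \in V) && (val p.1 == addm p.2 w)]|
  = #|[set k | (k \in V) && (shiftm k w \in U)]|.
Proof.
rewrite -(card_imset _ (f := fun k => (shiftm k w, k))); last by move=> x y [].
apply: eq_card => -[x y]; rewrite [in LHS]inE /=; apply/idP/imsetP.
  move=> /andP[/andP[xU yV] /eqP e]; exists y; last first.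
    by congr pair; apply: val_inj.
  by rewrite inE yV /=; have -> : shiftm y w = x by apply: val_inj.
by case=> k; rewrite inE => /andP[kV sU] [-> ->]; rewrite /= sU kV eqxx.
Qed.
Lemma card2 (U V : {set 'I_m}) w :
  #|[set p : 'I_m * 'I_m | (p.1 \in U) && (p.2 \in V) && (val p.2 == addm p.1 w)]|
  = #|[set k | (k \in U) && (shiftm k w \in V)]|.
Proof.
rewrite -(card_imset _ (f := fun k => (k, shiftm k w))); last by move=> x y [].
apply: eq_card => -[x y]; rewrite [in LHS]inE /=; apply/idP/imsetP.
  move=> /andP[/andP[xU yV] /eqP e]; exists x; last first.
    by congr pair; apply: val_inj.
  by rewrite inE xU /=; have -> : shiftm x w = y by apply: val_inj.
by case=> k; rewrite inE => /andP[kU sV] [-> ->]; rewrite /= sV kU eqxx.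
Qed.
Lemma cardR (A : {set 'I_m}) : (#|A|%:R : algC) = \sum_k bR (k \in A).
Proof.
rewrite -sum1_card big_mkcond natr_sum; apply: eq_bigr => k _; rewrite /bR.
by case: (k \in A).
Qed.
Lemma bR_and a b : bR (a && b) = bR a * bR b.
Proof. by case: a; case: b; rewrite /bR /= ?mulr1 ?mulr0. Qed.
Lemma sum_lin (j : algC) (x1 x2 x3 x4 x5 x6 : 'I_m -> algC) :
  \sum_k (1 - 2*x1 k - 2*x2 k + 2*x3 k + 2*x4 k + j*(2*x5 k - 2*x6 k))
  = m%:R - 2*(\sum_k x1 k) - 2*(\sum_k x2 k) + 2*(\sum_k x3 k) + 2*(\sum_k x4 k)
     + j*(2*(\sum_k x5 k) - 2*(\sum_k x6 k)).
Proof.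
rewrite !big_split /= !sumrN -?mulr_sumr sumr_const card_ord !big_split /= !sumrN -?mulr_sumr.
by [].
Qed.
Lemma cardR2 (U V : {set 'I_m}) w :
  (#|[set k | (k \in U) && (shiftm k w \in V)]|%:R : algC)
  = \sum_k bR (k \in U) * bR (shiftm k w \in V).
Proof. by rewrite cardR; apply: eq_bigr => k _; rewrite inE bR_and. Qed.
End S.

Lemma conjF (x y : algC) : x \is Num.real -> y \is Num.real ->
  (((1-'i)*(1-2*x) + (1+'i)*(1-2*y))/2)^* = ((1+'i)*(1-2*x) + (1-'i)*(1-2*y))/2.
Proof.
move=> hx hy.
have two : (2:algC) != 0 by rewrite (pnatr_eq0 _ 2).
have -> : ((1-'i)*(1-2*x) + (1+'i)*(1-2*y))/2 = (1 - x - y) + 'i*(x - y) by field.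
rewrite conjC_rect ?rpredB ?rpred1 //; by field.
Qed.

Lemma real_bR b : bR b \is Num.real.
Proof. by rewrite /bR realn. Qed.

Definition Bset m (f : 'I_m -> algC) := [set j : 'I_m | phi0 (f j) == -1].
Definition Dset m (f : 'I_m -> algC) := [set j : 'I_m | phi1 (f j) == -1].
Definition S1 m (B D : {set 'I_m}) w :=
  [set p : 'I_m * 'I_m | (p.1 \in B) && (p.2 \in D) && (val p.1 == addm p.2 w)].
Definition S2 m (B D : {set 'I_m}) w :=
  [set p : 'I_m * 'I_m | (p.1 \in B) && (p.2 \in D) && (val p.2 == addm p.1 w)].

Section F.
Variables (m : nat) (f : 'I_m -> algC).
Hypothesis q : quaternary f.
Let B := Bset f.
Let D := Dset f.

Lemma autocorr_eq w : autocorr f w =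
  (m%:R - 2*#|B|%:R - 2*#|D|%:R + 2*(ndiff B B w)%:R + 2*(ndiff D D w)%:R)
  + 'i * (2*(#|S1 B D w|)%:R - 2*(#|S2 B D w|)%:R).
Proof.
pose be k := bR (k \in B). pose de k := bR (k \in D).
pose h k := be k + de k + 'i * (be k - de k).
have hj : 'i * 'i = -1 :> algC by rewrite -expr2 sqrCi.
have E : forall k, f k * (f (shiftm k w))^* =
  (1 - 2*be k - 2*de k + 2*(be k * be (shiftm k w)) + 2*(de k * de (shiftm k w))
   + 'i*(2*(de k * be (shiftm k w)) - 2*(be k * de (shiftm k w))))
  + h k - h (shiftm k w).
  move=> k; rewrite [f k](qdecomp (q k)) [f (shiftm k w)](qdecomp (q _)).
  rewrite conjF ?real_bR // prod_id //.
  by rewrite /h /be /de /B /D /Bset /Dset !inE.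
rewrite /autocorr (eq_bigr _ (fun k _ => E k)) sumrB big_split /=.
rewrite (sum_shift (fun k => h k)) addrK sum_lin.
rewrite /ndiff card1 card1 /S1 /S2 card1 card2 !cardR2 !cardR.
done.
Qed.
End F.

Lemma norm1_iff (X Y : int) : (`|X%:~R + 'i * Y%:~R| == 1 :> algC) = (X^+2 + Y^+2 == 1).
Proof.
rewrite -(sqrp_eq1 (normr_ge0 _)) normC2_Re_Im Re_rect ?realz // Im_rect ?realz //.
by rewrite -!rmorphXn -rmorphD /= -[1 : algC]/((1:int)%:~R) eqr_int.
Qed.

Lemma int_sq (X Y : int) : (X^+2 + (2*Y)^+2 == 1) = ((X == 1) || (X == -1)) && (Y == 0).
Proof.
apply/eqP/idP.
  move=> h.
  have hY : Y = 0 by nia.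
  have hX : (X - 1) * (X + 1) = 0 by rewrite hY in h; nia.
  rewrite hY eqxx andbT.
  move/eqP: hX; rewrite mulf_eq0 subr_eq0 addr_eq0 => ->. done.
by case/andP => /orP[] /eqP -> /eqP ->.
Qed.

Lemma key (m : nat) (f : 'I_m -> algC) (r : nat) : quaternary f -> m = (2 * r + 1)%N ->
  forall w : nat,
  (`|autocorr f w| == 1) =
  ((((N_BD (Bset f) (Dset f) w)%:Z == ((#|Bset f| + #|Dset f|)%:Z - ((m.+1) %/ 2)%:Z))
   || ((N_BD (Bset f) (Dset f) w)%:Z == ((#|Bset f| + #|Dset f|)%:Z - ((m.+1) %/ 2)%:Z) + 1))
   && (#|S1 (Bset f) (Dset f) w| == #|S2 (Bset f) (Dset f) w|)).
Proof.
move=> q hm w.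
set B := Bset f; set D := Dset f.
rewrite autocorr_eq //.
set X : int := m%:Z - 2 * #|B|%:Z - 2 * #|D|%:Z + 2 * (ndiff B B w)%:Z + 2 * (ndiff D D w)%:Z.
set Y : int := #|S1 B D w|%:Z - #|S2 B D w|%:Z.
have -> : (m%:R - 2*#|B|%:R - 2*#|D|%:R + 2*(ndiff B B w)%:R + 2*(ndiff D D w)%:R
  + 'i * (2*(#|S1 B D w|)%:R - 2*(#|S2 B D w|)%:R) : algC) = X%:~R + 'i * (2 * Y)%:~R.
  rewrite /X /Y !(rmorphD, rmorphN, rmorphM, rmorph1) /=; ring.
rewrite norm1_iff int_sq.
have hmd : ((m.+1) %/ 2 = r + 1)%N.
  by rewrite hm; lia.
rewrite hmd /N_BD /X /Y.
congr andb.
  apply/orP/orP => -[/eqP h|/eqP h]; [right|left|right|left]; apply/eqP; lia.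
by apply/eqP/eqP => h; lia.
Qed.

Theorem theorem3 (m : nat) (f : 'I_m -> algC) :
  odd m -> quaternary f ->
  let B := [set j : 'I_m | phi0 (f j) == -1] in
  let D := [set j : 'I_m | phi1 (f j) == -1] in
  OQS f <->
  (ASDS2 B D #|B| #|D| ((#|B| + #|D|)%:Z - ((m.+1) %/ 2)%:Z) /\ symmetric_diff B D).
Proof.
move=> hodd q B D.
have hm : m = (2 * m./2 + 1)%N.
  by rewrite -{1}(odd_double_half m) hodd -mul2n addnC.
have K := key q hm.
rewrite /OQS /ASDS2 /symmetric_diff.
split.
  case=> _ H; split; first split=> //; first split=> //.
    move=> a ha; have := H a ha => /eqP; rewrite K => /andP[] //.
  move=> w.
  have [w0|wpos] := eqVneq (val w) 0%N.
    apply: eq_card => -[x y]; rewrite !inE /= w0 /addm !addn0 !modn_small //.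
    by congr andb; apply: eq_sym.
  have hw : (1 <= w <= m.-1)%N.
    by rewrite lt0n wpos /=; have := ltn_ord w; lia.
  by have := H w hw => /eqP; rewrite K => /andP[_ /eqP].
case=> [[_ [_ H1]] H2]; split=> // w hw; apply/eqP; rewrite K.
rewrite H1 //=.
have wm : (w < m)%N by lia.
by have := H2 (Ordinal wm) => /= ->.
Qed.
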